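(* Let $G=(V,E)$ be an undirected graph, let $K$ be the set of in-degree vectors of all orientations of $G$, and let $C_1\subset\dots\subset C_q=V$, $\{S_1,\dots,S_q\}$ and $\beta_1>\dots>\beta_q$ be the canonical chain, canonical partition and essential value-sequence of $K$. An orientation $D$ of $G$ is decreasingly minimal if and only if $\varrho_D(C_i)=0$ for each $i=1,\dots,q$ and $\beta_i-1\le\varrho_D(v)\le\beta_i$ for every node $v\in S_i$ $(i=1,\dots,q)$.
   Context: $\varrho_D(v)$ is the number of arcs of $D$ with head $v$, and $\varrho_D(X)$ the number of arcs entering $X$ (head in $X$, tail outside). The in-degree vector of $D$ is $(\varrho_D(v))_{v\in V}$. An orientation is decreasingly minimal if its in-degree vector is decreasingly minimal in $K$ (largest component as small as possible, then the second largest, etc.). Canonical objects: take a decreasingly minimal $m\in K$; for $u\in V$ let $T_m(u)=\{s\in V: m+\chi_s-\chi_u\in K\}$. Put $\beta_1=\max_v m(v)$, $C_1=\bigcup\{T_m(u):m(u)=\beta_1\}$; for $i\ge2$, while $C_{i-1}\ne V$, put $\beta_i=\max\{m(s):s\in V-C_{i-1}\}$, $C_i=\bigcup\{T_m(u):m(u)\ge\beta_i\}$; stop when $C_q=V$; $S_i=C_i-C_{i-1}$ with $C_0=\emptyset$. These objects are known not to depend on the choice of $m$. *)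

(* Defs.v *)
From mathcomp Require Import all_boot all_order all_algebra.
Set Implicit Arguments. Unset Strict Implicit. Unset Printing Implicit Defensive.

(* An orientation is a function [o : E -> bool]: if [o e] the arc goes from
   (ends e).1 to (ends e).2, otherwise from (ends e).2 to (ends e).1. *)

Section Orient.
Variables (V E : finType) (ends : E -> V * V).

Definition head (o : E -> bool) (e : E) : V := if o e then (ends e).2 else (ends e).1.
Definition tail (o : E -> bool) (e : E) : V := if o e then (ends e).1 else (ends e).2.

Definition indeg (o : E -> bool) (v : V) : nat := #|[set e | head o e == v]|.

Definition indegS (o : E -> bool) (X : {set V}) : nat :=
  #|[set e | (head o e \in X) && (tail o e \notin X)]|.

Definition inK (x : V -> int) : bool :=
  [exists o : {ffun E -> bool}, [forall v, Posz (indeg o v) == x v]].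

Definition dsort (m : V -> nat) : seq nat := sort geq [seq m v | v <- enum V].

Definition lex_lt (s t : seq nat) : Prop :=
  exists i, (forall j, j < i -> nth 0 s j = nth 0 t j) /\ nth 0 s i < nth 0 t i.

Definition dec_min (m : V -> nat) : Prop :=
  inK (fun v => Posz (m v)) /\
  forall o : E -> bool, ~ lex_lt (dsort (indeg o)) (dsort m).

Definition dec_min_orientation (o : E -> bool) : Prop := dec_min (indeg o).

Definition Tm (m : V -> nat) (u : V) : {set V} :=
  [set s | inK (fun v => (Posz (m v) + Posz (v == s) - Posz (v == u))%R)].

Definition next_beta (m : V -> nat) (C : {set V}) : nat := \max_(v in ~: C) m v.

(* Canonical chain: C 0 = set0; C (i+1) = V if C i = V, otherwise
   the union of T_m(u) over u with m u >= beta_{i+1} = max{m s : s in V - C_i}.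
   (For i = 0 this is the union over u with m u = beta_1 = max m.) *)
Fixpoint chainC (m : V -> nat) (i : nat) : {set V} :=
  match i with
  | 0 => set0
  | i'.+1 => let C := chainC m i' in
             if C == setT then setT
             else \bigcup_(u | next_beta m C <= m u) Tm m u
  end.

Definition betaI (m : V -> nat) (i : nat) : nat := next_beta m (chainC m i.-1).

Definition partS (m : V -> nat) (i : nat) : {set V} := chainC m i :\: chainC m i.-1.

End Orient.

(* Main.v *)
Require Import Defs.
From mathcomp Require Import all_boot all_order all_algebra.
From mathcomp Require Import zify.
Set Warnings "-all".
Set Implicit Arguments. Unset Strict Implicit.

Lemma lex_total (s t : seq nat) : size s = size t -> s <> t ->
  lex_lt s t \/ lex_lt t s.
Proof.
elim: s t => [|a s IH] [|b t] //= [] hsz hne.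
have [ab|ab] := eqVneq a b.
  subst b. have hst : s <> t by move=> h; apply: hne; rewrite h.
  case: (IH t hsz hst) => [[i [h1 h2]]|[i [h1 h2]]]; [left|right];
  exists i.+1; split => //; case => //= j hj; apply: h1.
case: (ltngtP a b) => h; last by rewrite h eqxx in ab.
- by left; exists 0.
- by right; exists 0.
Qed.

Lemma lex_sum (B : nat) (s t : seq nat) : sorted geq s -> sorted geq t ->
  size s = size t -> size s < B -> lex_lt s t ->
  \sum_(a <- s) B ^ a < \sum_(a <- t) B ^ a.
Proof.
move=> ss st hsz hB [i [hpre hi]].
have his : i < size s.
  rewrite ltnNge; apply/negP => h.
  by move: hi; rewrite nth_default // nth_default // -hsz.
rewrite (big_nth 0) [X in _ < X](big_nth 0) -hsz.
rewrite (@big_cat_nat _ _ _ i 0 (size s) _ _ (leq0n i) (ltnW his)) /=.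
rewrite [X in _ < X](@big_cat_nat _ _ _ i 0 (size s) _ _ (leq0n i) (ltnW his)) /=.
have -> : \sum_(0 <= j < i) B ^ nth 0 s j = \sum_(0 <= j < i) B ^ nth 0 t j.
  by apply: eq_big_nat => j /andP [_ hj]; rewrite hpre.
rewrite ltn_add2l.
have B0 : 0 < B by apply: leq_ltn_trans hB.
apply: (@leq_ltn_trans ((size s - i) * B ^ nth 0 s i)).
  rewrite -sum_nat_const_nat big_nat_cond [X in _ <= X]big_nat_cond; apply: leq_sum => j /andP[/andP[hij hj] _].
  apply: leq_pexp2l => //.
  have gtr : transitive geq by move=> a b c h1 h2; apply: leq_trans h2 h1.
  have := sorted_leq_nth gtr (fun x => leqnn x) 0 ss.
  by move=> /(_ i j); apply => //; rewrite inE.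
apply: (@leq_trans (B ^ (nth 0 s i).+1)).
  rewrite expnS; apply: (@leq_ltn_trans (size s * B ^ nth 0 s i)).
    by apply: leq_mul => //; apply: leq_subr.
  by rewrite ltn_mul2r expn_gt0 B0.
apply: (@leq_trans (B ^ nth 0 t i)); first exact: leq_pexp2l.
by rewrite big_ltn // leq_addr.
Qed.

Section Phi.
Variables (V E : finType) (ends : E -> V * V).
Definition BB := #|V|.+1.
Definition Phi (x : V -> nat) := \sum_v BB ^ x v.

Lemma phi_dsort (x : V -> nat) : Phi x = \sum_(a <- dsort x) BB ^ a.
Proof.
have hp : perm_eq (dsort x) [seq x v | v <- enum V] by rewrite /dsort perm_sort.
by rewrite (perm_big _ hp) big_map big_enum.
Qed.

Lemma size_dsort (x : V -> nat) : size (dsort x) = #|V|.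
Proof. by rewrite /dsort size_sort size_map cardT. Qed.

Lemma sorted_dsort (x : V -> nat) : sorted geq (dsort x).
Proof. apply: sort_sorted => a b; exact: leq_total. Qed.

Lemma lex_phi (x y : V -> nat) : lex_lt (dsort x) (dsort y) -> Phi x < Phi y.
Proof.
move=> h; rewrite !phi_dsort; apply: lex_sum => //; try exact: sorted_dsort.
  by rewrite !size_dsort.
by rewrite size_dsort.
Qed.

Lemma nlex_phi (x y : V -> nat) : ~ lex_lt (dsort y) (dsort x) -> Phi x <= Phi y.
Proof.
move=> h; rewrite leqNgt; apply/negP => hlt.
have hne : dsort y <> dsort x.
  by move=> e; move: hlt; rewrite !phi_dsort e ltnn.
case: (@lex_total (dsort y) (dsort x)) => //; first by rewrite !size_dsort.
by move/lex_phi; rewrite ltnNge (ltnW hlt).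
Qed.
End Phi.

Section Graph.
Variables (V E : finType) (ends : E -> V * V).

Lemma card_set_sum (P : pred E) : #|[set e | P e]| = \sum_e (P e : nat).
Proof.
rewrite -sum1_card big_mkcond /=; apply: eq_bigr => e _; rewrite inE.
by case: (P e).
Qed.

Lemma sum_eq1 (X : {set V}) (h : V) : \sum_(v in X) ((h == v) : nat) = (h \in X).
Proof.
case hX: (h \in X).
  rewrite (bigD1 h) //= eqxx big1 // => v /andP [_ hv].
  by rewrite eq_sym (negbTE hv).
rewrite big1 // => v vX; case: eqP => // e; subst v; by rewrite vX in hX.
Qed.

Definition inner (X : {set V}) := \sum_e ((((ends e).1 \in X) && ((ends e).2 \in X)) : nat).

Lemma indeg_sum (o : E -> bool) v : indeg ends o v = \sum_e ((Defs.head ends o e == v) : nat).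
Proof. by rewrite /indeg card_set_sum. Qed.

Lemma indegS_sum (o : E -> bool) X : indegS ends o X =
   \sum_e (((Defs.head ends o e \in X) && (Defs.tail ends o e \notin X)) : nat).
Proof. by rewrite /indegS card_set_sum. Qed.

Lemma indeg_ext (o1 o2 : E -> bool) : o1 =1 o2 -> forall v, indeg ends o1 v = indeg ends o2 v.
Proof. by move=> h v; rewrite !indeg_sum; apply: eq_bigr => e _; rewrite /Defs.head h. Qed.

Lemma count_identity (o : E -> bool) (X : {set V}) :
  \sum_(v in X) indeg ends o v = inner X + indegS ends o X.
Proof.
under eq_bigr => v _ do rewrite indeg_sum.
rewrite exchange_big /= indegS_sum /inner -big_split /=.
apply: eq_bigr => e _; rewrite sum_eq1 /Defs.head /tail.
by case: (o e); case: (_ \in X); case: (_ \in X).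
Qed.

Definition arcD (o : E -> bool) : rel V :=
  fun y z => [exists e, (Defs.tail ends o e == y) && (Defs.head ends o e == z)].

Definition flip (o : E -> bool) (e : E) : {ffun E -> bool} :=
  [ffun e' => if e' == e then ~~ o e' else o e'].

Lemma flip_indeg (o : E -> bool) e w :
  indeg ends (flip o e) w + (Defs.head ends o e == w) = indeg ends o w + (Defs.tail ends o e == w).
Proof.
rewrite !indeg_sum (bigD1 e) //= [X in _ = X + _](bigD1 e) //=.
have -> : \sum_(i | i != e) (Defs.head ends (flip o e) i == w : nat) =
          \sum_(i | i != e) (Defs.head ends o i == w : nat).
  by apply: eq_bigr => i hi; rewrite /Defs.head ffunE (negbTE hi).
rewrite /Defs.head /Defs.tail ffunE eqxx; case: (o e) => /=; lia.
Qed.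

Lemma path_rev (p : seq V) : forall (o : E -> bool) s, path (arcD o) s p -> uniq (s :: p) ->
  exists o' : {ffun E -> bool}, forall w,
    indeg ends o' w + (w == last s p) = indeg ends o w + (w == s).
Proof.
elim: p => [|x p IH] o s /=.
  move=> _ _; exists (finfun o) => w; congr (_ + _); apply: indeg_ext => e; by rewrite ffunE.
move=> /andP [/existsP [e /andP [/eqP he1 /eqP he2]] hp] /andP [hs hu].
have hp' : path (arcD (flip o e)) x p.
  apply: (@sub_in_path _ (predC1 s) (arcD o)); last first.
  - exact: hp.
  - rewrite /=; apply/andP; split.
      by apply/negP => /eqP hx; move: hs; rewrite hx inE eqxx.
    apply/allP => y hy; rewrite inE; apply/negP => /eqP hy'; move: hs.
    by rewrite -hy' inE hy orbT.
  move=> y z hy _ /existsP [e' /andP [h1 h2]]; apply/existsP; exists e'.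
  have he' : e' != e.
    apply/negP => /eqP ee; subst e'; move: hy; rewrite inE /= -(eqP h1) he1 eqxx //.
  by rewrite /Defs.head /Defs.tail ffunE (negbTE he') -/(Defs.head ends o e') -/(Defs.tail ends o e') h1 h2.
have [o' ho'] := IH (flip o e) x hp' hu.
exists o' => w; move: (ho' w) (flip_indeg o e w); rewrite he1 he2 (eq_sym x w) (eq_sym s w).
lia.
Qed.

End Graph.

Section Chain.
Variables (V E : finType) (ends : E -> V * V) (m0 : V -> nat) (D0 : {ffun E -> bool}).
Hypothesis hD0 : forall v, indeg ends D0 v = m0 v.

Local Notation C := (chainC ends m0).
Local Notation T := (Tm ends m0).

Lemma inK_nat (s u : V) : s \in T u <-> exists o : {ffun E -> bool},
  forall w, indeg ends o w + (w == u) = m0 w + (w == s).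
Proof.
rewrite inE; split.
  move=> /existsP [o /forallP ho]; exists o => w; move/eqP: (ho w); lia.
move=> [o ho]; apply/existsP; exists o; apply/forallP => w; apply/eqP.
move: (ho w); lia.
Qed.

Lemma Tm_reach u s : (s \in T u) = connect (arcD ends D0) s u.
Proof.
apply/idP/idP.
  move/inK_nat => [o ho]; apply/negPn/negP => hs.
  pose R := [set x | connect (arcD ends D0) x u].
  have hR0 : indegS ends D0 R = 0.
    rewrite indegS_sum big1 // => e _.
    case hh: (Defs.head ends D0 e \in R) => //=.
    rewrite (_ : (_ \notin R) = false) //; apply/negbF; move: hh; rewrite !inE => hh.
    apply: connect_trans hh; apply: connect1; apply/existsP; exists e; rewrite !eqxx.
    done.
  have h1 := count_identity ends o R.
  have h2 := count_identity ends D0 R.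
  rewrite hR0 addn0 in h2.
  have h3 : \sum_(v in R) indeg ends o v + (u \in R) = \sum_(v in R) m0 v + (s \in R).
    rewrite -!sum_eq1 -!big_split /=; apply: eq_bigr => w _.
    by rewrite (eq_sym u) (eq_sym s) ho.
  have h4 : \sum_(v in R) indeg ends D0 v = \sum_(v in R) m0 v.
    by apply: eq_bigr => w _; rewrite hD0.
  have uR : u \in R by rewrite inE connect0.
  have sR : s \notin R by rewrite inE.
  rewrite uR (negbTE sR) in h3.
  lia.
move=> /connectP [p hp ->].
case: (shortenP hp) => p' hp' hu _.
have [o' ho'] := path_rev hp' hu.
apply/inK_nat; exists o' => w; by rewrite ho' hD0.
Qed.

Lemma u_in_T u : u \in T u.
Proof. by rewrite Tm_reach connect0. Qed.

Lemma chain_step i : C i != setT ->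
  C i.+1 = \bigcup_(u | next_beta m0 (C i) <= m0 u) T u.
Proof. by move=> h /=; rewrite (negbTE h). Qed.

Lemma chain_setT i : C i = setT -> C i.+1 = setT.
Proof. by move=> h /=; rewrite h eqxx. Qed.

Lemma closedC i e : Defs.head ends D0 e \in C i -> Defs.tail ends D0 e \in C i.
Proof.
case: i => [|i]; first by rewrite /= inE.
case h: (C i == setT); first by rewrite /= h inE.
rewrite chain_step ?h // => /bigcupP [u hu hs]; apply/bigcupP; exists u => //.
move: hs; rewrite !Tm_reach; apply: connect_trans; apply: connect1.
by apply/existsP; exists e; rewrite !eqxx.
Qed.

Lemma rhoC0 i : indegS ends D0 (C i) = 0.
Proof.
rewrite indegS_sum big1 // => e _.
by case hh: (Defs.head ends D0 e \in C i) => //=; rewrite (closedC hh).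
Qed.

Lemma sumC_m0 i : \sum_(v in C i) m0 v = inner ends (C i).
Proof.
have := count_identity ends D0 (C i); rewrite rhoC0 addn0 => <-.
by apply: eq_bigr => v _; rewrite hD0.
Qed.

Lemma beta_lt i w : C i != setT -> w \notin C i.+1 -> m0 w < next_beta m0 (C i).
Proof.
move=> h hw; rewrite ltnNge; apply/negP => hb; move: hw.
by rewrite chain_step // => /bigcupP; apply; exists w => //; apply: u_in_T.
Qed.

Lemma chain_mono i : C i \subset C i.+1.
Proof.
case: i => [|i]; first by rewrite sub0set.
case h: (C i == setT); first by rewrite (chain_setT (chain_setT (eqP h))) subsetT.
case h': (C i.+1 == setT); first by rewrite (chain_setT (eqP h')) subsetT.
have e2 := chain_step (negbT h'); have e1 := chain_step (negbT h).
apply/subsetP => s; rewrite [in X in X -> _]e1 e2.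
move=> /bigcupP [u hu hs]; apply/bigcupP; exists u => //.
apply: leq_trans hu; apply/bigmax_leqP => w hw.
rewrite inE in hw; apply: ltnW; exact: beta_lt (negbT h) _.
Qed.

Lemma chain_grow i : C i != setT -> #|C i| < #|C i.+1|.
Proof.
move=> h; apply: proper_card; rewrite properE chain_mono /=.
have : 0 < #|~: C i|.
  rewrite card_gt0; apply/negP => /eqP e; move: h; by rewrite -[C i]setCK e setC0 eqxx.
case/(eq_bigmax_cond m0) => w hw hmax.
apply/negP => /subsetP /(_ w) hs; rewrite inE in hw; move/negP: hw; apply; apply: hs.
rewrite (negbTE h); apply/bigcupP; exists w; last exact: u_in_T.
by rewrite /next_beta hmax.
Qed.

Lemma chain_full : C #|V| = setT.
Proof.
suff : forall i, C i = setT \/ i <= #|C i|.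
  case/(_ #|V|) => // h; apply/eqP; rewrite eqEcard subsetT cardsT h //.
elim => [|i [IH|IH]]; first by right.
  by left; rewrite /= IH eqxx.
case h: (C i == setT); first by left; rewrite /= h.
right; apply: leq_ltn_trans IH _; exact: chain_grow (negbT h).
Qed.

End Chain.

Section Arith.
Variable V : finType.
Local Notation BB := (BB V).

Lemma BB_gt0 : 0 < BB. Proof. by []. Qed.

Lemma sum_split (C C' : {set V}) (F : V -> nat) : C \subset C' ->
  \sum_(v in C') F v = \sum_(v in C) F v + \sum_(v in C' :\: C) F v.
Proof. by move=> h; rewrite (big_setID C) /= (setIidPr h). Qed.

Lemma phi_splitC (C : {set V}) (x : V -> nat) :
  Phi x = \sum_(v in C) BB ^ x v + \sum_(v in ~: C) BB ^ x v.
Proof.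
rewrite /Phi (bigID (fun v => v \in C)) /=; congr (_ + _).
by apply: eq_bigl => v; rewrite inE.
Qed.

Lemma lin_trick (S : {set V}) (b : nat) (x y : V -> nat) :
  (forall v, v \in S -> b - 1 <= x v <= b) ->
  (forall v, v \in S -> b - 1 <= y v <= b) ->
  \sum_(v in S) x v = \sum_(v in S) y v ->
  \sum_(v in S) BB ^ x v = \sum_(v in S) BB ^ y v.
Proof.
move=> hx hy hs.
case: b hx hy => [|b] hx hy.
  rewrite (eq_bigr (fun _ => 1)); last by move=> v /hx; rewrite leqn0 => /eqP ->.
  by rewrite [RHS](eq_bigr (fun _ => 1)) // => v /hy; rewrite leqn0 => /eqP ->.
have key : forall z : V -> nat, (forall v, v \in S -> b.+1 - 1 <= z v <= b.+1) ->
  (\sum_(v in S) z v = \sum_(v in S) b + \sum_(v in S) (z v == b.+1 : nat)) /\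
  (\sum_(v in S) BB ^ z v = \sum_(v in S) BB ^ b +
      (\sum_(v in S) (z v == b.+1 : nat)) * (BB ^ b.+1 - BB ^ b)).
  move=> z hz; split.
    rewrite -big_split /=; apply: eq_bigr => v /hz; rewrite subn1 /=.
    case: eqP => [->|hne]; first by rewrite addn1.
    move=> h; lia.
  rewrite big_distrl -big_split /=; apply: eq_bigr => v /hz; rewrite subn1 /= => h.
  case: eqP => [->|hne]; last by rewrite (_ : z v = b); [rewrite /= mul0n addn0 | lia].
  rewrite mul1n subnKC //; apply: leq_pexp2l => //.
have [hx1 hx2] := key x hx; have [hy1 hy2] := key y hy.
rewrite hx2 hy2; congr (_ + _ * _); apply/eqP.
by rewrite -(eqn_add2l (\sum_(v in S) b)) -hx1 -hy1 hs.
Qed.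

Lemma decomp (W : {set V}) (b : nat) (x : V -> nat) :
  (forall v, v \in W -> x v <= b) ->
  \sum_(v in W) BB ^ x v = (\sum_(v in W) (x v == b : nat)) * BB ^ b +
     \sum_(v in W) ((x v != b) * BB ^ x v) /\
  \sum_(v in W) ((x v != b) * BB ^ x v) < BB ^ b.
Proof.
move=> hx; split.
  rewrite big_distrl -big_split /=; apply: eq_bigr => v _.
  by case: eqP => [->|]; rewrite ?mul1n ?mul0n ?addn0.
rewrite -(ltn_pmul2r (BB_gt0)) big_distrl /=.
apply: (@leq_ltn_trans (\sum_(v in W) BB ^ b)).
  apply: leq_sum => v /hx hv; case: eqP => [//|hne]; rewrite mul1n -expnSr.
  by apply: leq_pexp2l => //; lia.
rewrite sum_nat_const mulnC ltn_mul2l expn_gt0 /=.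
by apply: (@leq_ltn_trans #|V|) => //; apply: max_card.
Qed.

Lemma digit (W : {set V}) (b : nat) (x y : V -> nat) :
  (forall v, v \in W -> x v <= b) -> (forall v, v \in W -> y v <= b) ->
  \sum_(v in W) BB ^ x v = \sum_(v in W) BB ^ y v ->
  \sum_(v in W) (x v == b : nat) = \sum_(v in W) (y v == b : nat).
Proof.
move=> hx hy; have [e1 l1] := decomp hx; have [e2 l2] := decomp hy.
rewrite e1 e2 => /(congr1 (fun n => n %/ BB ^ b)).
by rewrite !divnMDl ?expn_gt0 // !divn_small // !addn0.
Qed.

Lemma exceed (W : {set V}) (b : nat) (x y : V -> nat) :
  (forall v, v \in W -> y v <= b) ->
  \sum_(v in W) BB ^ x v = \sum_(v in W) BB ^ y v ->
  forall v, v \in W -> x v <= b.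
Proof.
move=> hy he v hv; rewrite leqNgt; apply/negP => hlt.
have h1 : BB ^ b.+1 <= \sum_(w in W) BB ^ x w.
  rewrite (bigD1 v) //=; apply: leq_trans (leq_addr _ _).
  exact: leq_pexp2l.
have h2 : \sum_(w in W) BB ^ y w < BB ^ b.+1.
  apply: (@leq_ltn_trans (\sum_(w in W) BB ^ b)).
    by apply: leq_sum => w /hy hw; apply: leq_pexp2l.
  rewrite sum_nat_const expnS ltn_mul2r expn_gt0 /=.
  by apply: (@leq_ltn_trans #|V|) => //; apply: max_card.
by move: h1; rewrite he leqNgt h2.
Qed.

End Arith.

Lemma strict_sum (I : finType) (S : {pred I}) (F G : I -> nat) v :
  (forall w, w \in S -> F w <= G w) -> v \in S -> F v < G v ->
  \sum_(w in S) F w < \sum_(w in S) G w.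
Proof.
move=> h vS hv; rewrite (bigD1 v) //= [X in _ < X](bigD1 v) //=.
rewrite -addSn leq_add //; apply: leq_sum => w /andP [wS _]; exact: h.
Qed.

Section Main.
Variables (V E : finType) (ends : E -> V * V) (m0 : V -> nat) (D0 : {ffun E -> bool}).
Hypothesis hD0 : forall v, indeg ends D0 v = m0 v.
Hypothesis hmin : forall o : E -> bool, Phi m0 <= Phi (indeg ends o).

Local Notation C := (chainC ends m0).
Local Notation T := (Tm ends m0).
Local Notation BB := (BB V).

Lemma exchange u v : v \in T u -> m0 v + 2 <= m0 u -> False.
Proof.
move=> /inK_nat [o ho] huv.
have uv : u != v by apply/negP => /eqP e; subst v; lia.
have hV : 0 < #|V| by apply/card_gt0P; exists u.
have split2 : forall x : V -> nat, Phi x = BB ^ x u + BB ^ x v +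
    \sum_(w | (w != u) && (w != v)) BB ^ x w.
  move=> x; rewrite /Phi (bigD1 u) //= (bigD1 v) /=; last by rewrite eq_sym.
  by rewrite addnA.
have hm := hmin o; rewrite !split2 in hm.
have eqR : \sum_(w | (w != u) && (w != v)) BB ^ indeg ends o w =
          \sum_(w | (w != u) && (w != v)) BB ^ m0 w.
  apply: eq_bigr => w /andP [wu wv]; move: (ho w).
  by rewrite (negbTE wu) (negbTE wv) !addn0 => ->.
rewrite eqR in hm.
have hou : indeg ends o u + 1 = m0 u by move: (ho u); rewrite eqxx (negbTE uv) /=; lia.
have hov : indeg ends o v = m0 v + 1 by move: (ho v); rewrite eqxx (eq_sym v u) (negbTE uv) /=; lia.
rewrite hov -hou in hm huv.
set a := indeg ends o u in hm huv; set b := m0 v in hm huv.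
have h1 : BB ^ (b + 1) <= BB ^ a by apply: leq_pexp2l => //; lia.
have h2 : 2 * BB ^ a <= BB ^ (a + 1) by rewrite addn1 expnS leq_mul2r; apply/orP; right; rewrite ltnS.
have h3 : 0 < BB ^ b by rewrite expn_gt0.
lia.
Qed.

Lemma bounds_m0 i v : C i != setT -> v \in C i.+1 :\: C i ->
  next_beta m0 (C i) - 1 <= m0 v <= next_beta m0 (C i).
Proof.
move=> h /setDP [hv1 hv2]; apply/andP; split; last first.
  by apply: leq_bigmax_cond; rewrite inE.
move: hv1; rewrite chain_step // => /bigcupP [u hu hvu].
have : ~ (m0 v + 2 <= m0 u) by move=> hh; exact: exchange hvu hh.
lia.
Qed.

Definition Inv (D : E -> bool) i := indegS ends D (C i) = 0 /\
  \sum_(v in C i) BB ^ indeg ends D v = \sum_(v in C i) BB ^ m0 v.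

Lemma sumC_D (D : E -> bool) i : indegS ends D (C i) = 0 ->
  \sum_(v in C i) indeg ends D v = inner ends (C i).
Proof. by move=> h; rewrite count_identity h addn0. Qed.

Lemma step_bwd (D : E -> bool) i : C i != setT -> Inv D i ->
  indegS ends D (C i.+1) = 0 ->
  (forall v, v \in C i.+1 :\: C i ->
     next_beta m0 (C i) - 1 <= indeg ends D v <= next_beta m0 (C i)) ->
  Inv D i.+1.
Proof.
move=> h [r0 s0] r1 hb; split => //.
have mono := chain_mono hD0 i.
rewrite !(sum_split _ mono) s0; congr (_ + _).
apply: lin_trick hb _ _; first by move=> v hv; exact: bounds_m0 h hv.
have e1 := sumC_D r1; have e0 := sumC_D r0.
have f1 := sumC_m0 hD0 (i.+1); have f0 := sumC_m0 hD0 i.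
rewrite !(sum_split _ mono) in e1 f1.
lia.
Qed.

Lemma step_fwd (D : E -> bool) i : Phi (indeg ends D) = Phi m0 ->
  C i != setT -> Inv D i ->
  [/\ indegS ends D (C i.+1) = 0,
      (forall v, v \in C i.+1 :\: C i ->
         next_beta m0 (C i) - 1 <= indeg ends D v <= next_beta m0 (C i)) &
      Inv D i.+1].
Proof.
move=> hPhi h [r0 s0].
set beta := next_beta m0 (C i).
have mono := chain_mono hD0 i.
set S := C i.+1 :\: C i.
have hW : \sum_(v in ~: C i) BB ^ indeg ends D v = \sum_(v in ~: C i) BB ^ m0 v.
  by move: hPhi; rewrite (phi_splitC (C i)) (phi_splitC (C i) m0) s0 => /addnI.
have hm0W : forall w, w \in ~: C i -> m0 w <= beta.
  by move=> w hw; apply: leq_bigmax_cond.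
have hDW := exceed hm0W hW.
have hcnt := digit hDW hm0W hW.
have SW : S \subset ~: C i by apply/subsetP => w /setDP [_ hw]; rewrite inE.
have c1 : \sum_(v in S) (indeg ends D v == beta : nat) <=
          \sum_(v in ~: C i) (indeg ends D v == beta : nat).
  by rewrite (sum_split _ SW) leq_addr.
have c2 : \sum_(v in ~: C i) (m0 v == beta : nat) = \sum_(v in S) (m0 v == beta : nat).
  rewrite (sum_split _ SW) [X in _ + X]big1 ?addn0 // => w /setDP [hw1 hw2].
  have : w \notin C i.+1.
    apply/negP => hw3; move/negP: hw2; apply; rewrite /S inE hw3 andbT.
    by rewrite inE in hw1.
  move/(beta_lt hD0 h) => hlt; by rewrite (ltn_eqF hlt).
have hsum : \sum_(v in S) indeg ends D v =
            \sum_(v in S) m0 v + indegS ends D (C i.+1).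
  have e1 := count_identity ends D (C i.+1); have e0 := sumC_D r0.
  have f1 := sumC_m0 hD0 (i.+1); have f0 := sumC_m0 hD0 i.
  rewrite !(sum_split _ mono) in e1 f1.
  rewrite /S; lia.
have hDS : forall v, v \in S -> indeg ends D v <= beta by move=> v /(subsetP SW); exact: hDW.
suff [r1 hb] : indegS ends D (C i.+1) = 0 /\
      (forall v, v \in S -> beta - 1 <= indeg ends D v <= beta).
  by split => //; apply: step_bwd.
case Eb: beta hDS hsum => [|b] hDS hsum.
  have z : \sum_(v in S) indeg ends D v = 0.
    by apply: big1 => v /hDS; rewrite leqn0 => /eqP.
  by split; [lia | move=> v /hDS ->].
have hm0S : \sum_(v in S) m0 v = \sum_(v in S) b + \sum_(v in S) (m0 v == b.+1 : nat).
  rewrite -big_split /=; apply: eq_bigr => v hv; have := bounds_m0 h hv.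
  rewrite -/beta Eb subn1 /=; case: eqP => [->|]; first by rewrite addn1.
  by move=> ne hh; lia.
have hle : forall v, v \in S -> indeg ends D v <= b + (indeg ends D v == b.+1).
  move=> v /hDS; case: eqP => [->|ne] hh; first by rewrite addn1.
  by rewrite addn0; lia.
have hDle : \sum_(v in S) indeg ends D v <=
    \sum_(v in S) (b + (indeg ends D v == b.+1)) by apply: leq_sum.
rewrite big_split /= in hDle.
rewrite Eb in c1 c2 hcnt.
have r1 : indegS ends D (C i.+1) = 0 by lia.
split => // v hv; rewrite subn1 /= hDS // andbT leqNgt; apply/negP => hlt.
have := strict_sum hle hv; rewrite big_split /=.
have : indeg ends D v < b + (indeg ends D v == b.+1).
  by apply: leq_trans hlt _; apply: leq_addr.
move=> hh /(_ hh); lia.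
Qed.

End Main.
Unset Implicit Arguments. Set Strict Implicit.

Theorem theorem4p7 (V E : finType) (ends : E -> V * V)
    (m0 : V -> nat) (Hm0 : dec_min ends m0) (D : E -> bool) :
  dec_min_orientation ends D <->
  (forall i : nat, 0 < i -> chainC ends m0 i.-1 != setT ->
     indegS ends D (chainC ends m0 i) = 0 /\
     forall v, v \in partS ends m0 i ->
       betaI ends m0 i - 1 <= indeg ends D v <= betaI ends m0 i).
Proof.
have [hK hlex] := Hm0.
case/existsP: hK => D0 /forallP hD0'.
have hD0 : forall v, indeg ends D0 v = m0 v by move=> v; move/eqP: (hD0' v) => [].
have hmin : forall o : E -> bool, Phi m0 <= Phi (indeg ends o).
  by move=> o; apply: nlex_phi; apply: hlex.
have hP0 : Phi (indeg ends D0) = Phi m0 by apply: eq_bigr => v _; rewrite hD0.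
have Inv0 : Inv ends m0 D 0.
  split; first by rewrite indegS_sum big1 // => e _; rewrite /= inE.
  by rewrite /= !big_set0.
split.
  move=> [_ hD].
  have hPhi : Phi (indeg ends D) = Phi m0.
    apply/eqP; rewrite eqn_leq hmin andbT -hP0; apply: nlex_phi; exact: hD.
  have InvAll : forall i, Inv ends m0 D i.
    elim => // i IH.
    case h: (chainC ends m0 i == setT).
      by move: IH; rewrite /Inv (chain_setT (eqP h)) (eqP h).
    by case: (step_fwd hD0 hmin hPhi (negbT h) IH).
  case => // i _ /= hi.
  by case: (step_fwd hD0 hmin hPhi hi (InvAll i)).
move=> H.
have InvAll : forall i, Inv ends m0 D i.
  elim => // i IH.
  case h: (chainC ends m0 i == setT).
    by move: IH; rewrite /Inv (chain_setT (eqP h)) (eqP h).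
  have [r1 hb] := H i.+1 isT (negbT h).
  apply: (step_bwd hD0 hmin (negbT h) IH r1) => v hv; exact: hb v hv.
have hPhi : Phi (indeg ends D) = Phi m0.
  have [_ s] := InvAll #|V|.
  rewrite (phi_splitC (chainC ends m0 #|V|)) (phi_splitC (chainC ends m0 #|V|) m0) s.
  by rewrite (chain_full hD0) setCT !big_set0.
split.
  apply/existsP; exists (finfun D); apply/forallP => v.
  have he : finfun D =1 D by move=> e; rewrite ffunE.
  by rewrite (indeg_ext ends he).
move=> o /lex_phi; rewrite hPhi ltnNge hmin //.
Qed.
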